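(* Consider the discrete-time LTI system $x^+ = A^\star x + B^\star u$, $y = C^\star x$ with $x\in\mathbb{R}^n$, $u\in\mathbb{R}^m$, $y\in\mathbb{R}^p$, where $(A^\star,C^\star)$ is observable with observability index $\ell^\star$. Let $\mathcal{O}_{\ell^\star} := \begin{bmatrix} C^\star \\ C^\star A^\star \\ \vdots \\ C^\star {A^\star}^{\ell^\star-1}\end{bmatrix}\in\mathbb{R}^{p\ell^\star\times n}$, let $\mathcal{O}_{\ell^\star}^{\mathrm{L}}$ be a left inverse of it ($\mathcal{O}_{\ell^\star}^{\mathrm{L}}\mathcal{O}_{\ell^\star}=I_n$), let $\mathcal{T}_{\ell^\star}\in\mathbb{R}^{p\ell^\star\times m\ell^\star}$ be the block lower-triangular Toeplitz matrix whose $(i,j)$ block ($i,j=1,\dots,\ell^\star$) is $C^\star {A^\star}^{i-j-1}B^\star$ if $i>j$ and $0_{p\times m}$ otherwise, and let $\mathcal{R}_{\ell^\star} := \begin{bmatrix} {A^\star}^{\ell^\star-1}B^\star & \cdots & A^\star B^\star & B^\star\end{bmatrix}$. Define $Z_{1\ell^\star} := C^\star {A^\star}^{\ell^\star}\mathcal{O}_{\ell^\star}^{\mathrm{L}}$, $Z_{2\ell^\star} := C^\star\mathcal{R}_{\ell^\star} - C^\star {A^\star}^{\ell^\star}\mathcal{O}_{\ell^\star}^{\mathrm{L}}\mathcal{T}_{\ell^\star}$, $Z_{\ell^\star} := \begin{bmatrix} Z_{1\ell^\star} & Z_{2\ell^\star}\end{bmatrix}$. Let $\mathbf{F}_{\ell^\star}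 := \mathrm{blockdiag}(S_p, S_m)$, where $S_p\in\mathbb{R}^{p\ell^\star\times p\ell^\star}$ (resp. $S_m\in\mathbb{R}^{m\ell^\star\times m\ell^\star}$) is the block shift matrix with identity blocks $I_p$ (resp. $I_m$) on the first block superdiagonal and zeros elsewhere; let $\mathbf{L}_{\ell^\star}\in\mathbb{R}^{(p+m)\ell^\star\times p}$ have $I_p$ in its $\ell^\star$-th block row of size $p$ and zeros elsewhere, and let $\mathbf{B}_{\ell^\star}\in\mathbb{R}^{(p+m)\ell^\star\times m}$ have $I_m$ as its last block row (of size $m$) and zeros elsewhere. Set $\mathbf{A}_{\ell^\star} := \mathbf{F}_{\ell^\star} + \mathbf{L}_{\ell^\star} Z_{\ell^\star}$ and $\mathbf{B}^{\mathrm{d}}_{\ell^\star} := \mathbf{L}_{\ell^\star}\begin{bmatrix} I_p & -Z_{1\ell^\star} & -Z_{2\ell^\star}\end{bmatrix}$. Data are collected for $k=0,\dots,T$: the measured input is $u^{\mathrm{m}}(k) = u(k) + d^u(k)$ and the measured output is $y^{\mathrm{m}}(k) = y(k) + d^y(k)$, where $u(k)$ is the actual input, $y(k)=C^\star x(k)$ the actual output, and $d^u,d^y$ unknown noise. Define $\Psi_1 := \begin{bmatrix} y^{\mathrm{m}}(1) & \cdots & y^{\mathrm{m}}(T-\ell^\star+1)\\ \vdots & & \vdots\\ y^{\mathrm{m}}(\ell^\star) & \cdots & y^{\mathrm{m}}(T)\\ u^{\mathrm{m}}(1) & \cdots & u^{\mathrm{m}}(T-\ell^\star+1)\\ \vdots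 & & \vdots\\ u^{\mathrm{m}}(\ell^\star) & \cdots & u^{\mathrm{m}}(T)\end{bmatrix}$, $\Psi_0 := \begin{bmatrix} y^{\mathrm{m}}(0) & \cdots & y^{\mathrm{m}}(T-\ell^\star)\\ \vdots & & \vdots\\ y^{\mathrm{m}}(\ell^\star-1) & \cdots & y^{\mathrm{m}}(T-1)\\ u^{\mathrm{m}}(0) & \cdots & u^{\mathrm{m}}(T-\ell^\star)\\ \vdots & & \vdots\\ u^{\mathrm{m}}(\ell^\star-1) & \cdots & u^{\mathrm{m}}(T-1)\end{bmatrix}$, $U_1 := \begin{bmatrix} u^{\mathrm{m}}(\ell^\star) & \cdots & u^{\mathrm{m}}(T)\end{bmatrix}$, $\Delta_{10} := \begin{bmatrix} d^y(\ell^\star) & \cdots & d^y(T)\\ d^y(0) & \cdots & d^y(T-\ell^\star)\\ \vdots & & \vdots\\ d^y(\ell^\star-1) & \cdots & d^y(T-1)\\ d^u(0) & \cdots & d^u(T-\ell^\star)\\ \vdots & & \vdots\\ d^u(\ell^\star-1) & \cdots & d^u(T-1)\end{bmatrix}$. Then the data satisfy, for $k=\ell^\star,\dots,T$, $y^{\mathrm{m}}(k) = Z_{1\ell^\star}\begin{bmatrix} y^{\mathrm{m}}(k-\ell^\star)\\ \vdots\\ y^{\mathrm{m}}(k-1)\end{bmatrix} + Z_{2\ell^\star}\begin{bmatrix} u^{\mathrm{m}}(k-\ell^\star)\\ \vdots\\ u^{\mathrm{m}}(k-1)\end{bmatrix} - Z_{1\ell^\star}\begin{bmatrix} d^y(k-\ell^\star)\\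 \vdots\\ d^y(k-1)\end{bmatrix} - Z_{2\ell^\star}\begin{bmatrix} d^u(k-\ell^\star)\\ \vdots\\ d^u(k-1)\end{bmatrix} + d^y(k)$, and $\begin{bmatrix} y^{\mathrm{m}}(k-\ell^\star+1)\\ \vdots\\ y^{\mathrm{m}}(k)\\ u^{\mathrm{m}}(k-\ell^\star+1)\\ \vdots\\ u^{\mathrm{m}}(k)\end{bmatrix} = (\mathbf{F}_{\ell^\star} + \mathbf{L}_{\ell^\star}[Z_{1\ell^\star}\ Z_{2\ell^\star}])\begin{bmatrix} y^{\mathrm{m}}(k-\ell^\star)\\ \vdots\\ y^{\mathrm{m}}(k-1)\\ u^{\mathrm{m}}(k-\ell^\star)\\ \vdots\\ u^{\mathrm{m}}(k-1)\end{bmatrix} + \mathbf{B}_{\ell^\star} u^{\mathrm{m}}(k) + \mathbf{L}_{\ell^\star}[I_p\ -Z_{1\ell^\star}\ -Z_{2\ell^\star}]\begin{bmatrix} d^y(k)\\ d^y(k-\ell^\star)\\ \vdots\\ d^y(k-1)\\ d^u(k-\ell^\star)\\ \vdots\\ d^u(k-1)\end{bmatrix}$, and, in matrix form, $\Psi_1 = (\mathbf{F}_{\ell^\star} + \mathbf{L}_{\ell^\star} Z_{\ell^\star})\Psi_0 + \mathbf{B}_{\ell^\star} U_1 + \mathbf{L}_{\ell^\star}[I_p\ -Z_{\ell^\star}]\Delta_{10} = \mathbf{A}_{\ell^\star}\Psi_0 + \mathbf{B}_{\ell^\star} U_1 + \mathbf{B}^{\mathrm{d}}_{\ell^\star}\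Delta_{10}$.
   Context: Unknown system $(A^\star,B^\star,C^\star)$; only the observability index $\ell^\star$ is known. Noisy input-output data $\{u^{\mathrm{m}}(k),y^{\mathrm{m}}(k)\}_{k=0}^T$ are collected from an experiment on the system with additive input noise $d^u$ and output noise $d^y$. All definitions needed are given in the claim. *)

(* Defs.v *)
From HB Require Import structures.
From mathcomp Require Import all_boot all_order all_algebra.
Set Implicit Arguments. Unset Strict Implicit. Unset Printing Implicit Defensive.
Import Order.TTheory GRing.Theory Num.Theory.
Local Open Scope ring_scope.

(* Decoding a row index k < a*b of a matrix made of a x b-blocks of height b
   into (block index k %/ b, index inside the block k %% b). *)
Lemma blk_idx_lt (a b : nat) (k : 'I_(a * b)) : (k %/ b < a)%N.
Proof.
have kab : (k < a * b)%N := ltn_ord k.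
have b0 : (0 < b)%N.
  move: (nat_of_ord k) kab => j; rewrite lt0n; apply: contraTneq => ->.
  by rewrite muln0 ltn0.
by rewrite ltn_divLR.
Qed.

Lemma in_idx_lt (a b : nat) (k : 'I_(a * b)) : (k %% b < b)%N.
Proof.
have kab : (k < a * b)%N := ltn_ord k.
have b0 : (0 < b)%N.
  move: (nat_of_ord k) kab => j; rewrite lt0n; apply: contraTneq => ->.
  by rewrite muln0 ltn0.
by rewrite ltn_mod.
Qed.

Definition bidx (a b : nat) (k : 'I_(a * b)) : 'I_a := Ordinal (blk_idx_lt k).
Definition iidx (a b : nat) (k : 'I_(a * b)) : 'I_b := Ordinal (in_idx_lt k).

Definition blockmx (R : Type) (a b p q : nat) (f : 'I_a -> 'I_b -> 'M[R]_(p, q))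
  : 'M[R]_(a * p, b * q) :=
  \matrix_(i, j) f (bidx i) (bidx j) (iidx i) (iidx j).

Definition blockcol (R : Type) (a p q : nat) (f : 'I_a -> 'M[R]_(p, q))
  : 'M[R]_(a * p, q) :=
  \matrix_(i, j) f (bidx i) (iidx i) j.

Definition blockrow (R : Type) (b p q : nat) (f : 'I_b -> 'M[R]_(p, q))
  : 'M[R]_(p, b * q) :=
  \matrix_(i, j) f (bidx j) i (iidx j).

Section Sys.
Variables (R : realFieldType) (n m p : nat).

Definition obsmx (A : 'M[R]_n) (C : 'M[R]_(p, n)) (l : nat) : 'M[R]_(l * p, n) :=
  blockcol (fun i : 'I_l => C *m A ^+ i).

Definition obs_index (A : 'M[R]_n) (C : 'M[R]_(p, n)) (l : nat) : Prop :=
  \rank (obsmx A C l) = n /\ forall k, (k < l)%N -> (\rank (obsmx A C k) < n)%N.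

Definition toepmx (A : 'M[R]_n) (B : 'M[R]_(n, m)) (C : 'M[R]_(p, n)) (l : nat)
  : 'M[R]_(l * p, l * m) :=
  blockmx (fun (i : 'I_l) (j : 'I_l) =>
    if (j < i)%N then C *m A ^+ (i - j - 1) *m B else 0).

Definition ctrbmx (A : 'M[R]_n) (B : 'M[R]_(n, m)) (l : nat) : 'M[R]_(n, l * m) :=
  blockrow (fun j : 'I_l => A ^+ (l - 1 - j) *m B).

Definition Z1 (A : 'M[R]_n) (C : 'M[R]_(p, n)) (l : nat) (OL : 'M[R]_(n, l * p))
  : 'M[R]_(p, l * p) := C *m A ^+ l *m OL.

Definition Z2 (A : 'M[R]_n) (B : 'M[R]_(n, m)) (C : 'M[R]_(p, n)) (l : nat)
  (OL : 'M[R]_(n, l * p)) : 'M[R]_(p, l * m) :=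
  C *m ctrbmx A B l - C *m A ^+ l *m OL *m toepmx A B C l.

Definition Zmx A B C l OL : 'M[R]_(p, l * p + l * m) :=
  row_mx (Z1 A C OL) (Z2 A B C OL).

End Sys.

Definition shiftmx (R : realFieldType) (l q : nat) : 'M[R]_(l * q) :=
  blockmx (fun (i j : 'I_l) => if (j == i.+1 :> nat) then 1%:M else 0).

Definition lastblk (R : realFieldType) (l q : nat) : 'M[R]_(l * q, q) :=
  blockcol (fun i : 'I_l => if (i == l.-1 :> nat) then 1%:M else 0).

Definition Fmx (R : realFieldType) (l p m : nat) : 'M[R]_(l * p + l * m) :=
  block_mx (shiftmx R l p) 0 0 (shiftmx R l m).

Definition Lmx (R : realFieldType) (l p m : nat) : 'M[R]_(l * p + l * m, p) :=
  col_mx (lastblk R l p) 0.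

Definition Bmx (R : realFieldType) (l p m : nat) : 'M[R]_(l * p + l * m, m) :=
  col_mx 0 (lastblk R l m).

Definition stack (R : realFieldType) (q l : nat) (s : nat -> 'cV[R]_q) (t : nat)
  : 'cV[R]_(l * q) :=
  blockcol (fun i : 'I_l => s (t + i)%N).

Definition Psimx (R : realFieldType) (p m l N : nat) (ym : nat -> 'cV[R]_p)
  (um : nat -> 'cV[R]_m) (t0 : nat) : 'M[R]_(l * p + l * m, N) :=
  \matrix_(i, j) (col_mx (stack l ym (t0 + j)%N) (stack l um (t0 + j)%N)) i 0.

Definition U1mx (R : realFieldType) (m l N : nat) (um : nat -> 'cV[R]_m)
  : 'M[R]_(m, N) := \matrix_(i, j) um (l + j)%N i 0.

Definition Delta10 (R : realFieldType) (p m l N : nat) (dy : nat -> 'cV[R]_p)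
  (du : nat -> 'cV[R]_m) : 'M[R]_(p + (l * p + l * m), N) :=
  \matrix_(i, j) (col_mx (dy (l + j)%N) (col_mx (stack l dy j) (stack l du j))) i 0.

(* Main.v *)
Require Import Defs.
From HB Require Import structures.
From mathcomp Require Import all_boot all_order all_algebra.
From mathcomp Require Import zify.
Import Order.TTheory GRing.Theory Num.Theory.
Local Open Scope ring_scope.
Set Implicit Arguments. Unset Strict Implicit.

Lemma mkidx_lt a q (i : 'I_a) (j : 'I_q) : (i * q + j < a * q)%N.
Proof. have := ltn_ord i; have := ltn_ord j; nia. Qed.

Definition mkidx a q (i : 'I_a) (j : 'I_q) : 'I_(a * q) := Ordinal (mkidx_lt i j).

Lemma bidx_mk a q (i : 'I_a) (j : 'I_q) : bidx (mkidx i j) = i.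
Proof.
apply/val_inj => /=; have jq := ltn_ord j.
by rewrite divnMDl ?(leq_ltn_trans _ jq) // divn_small // addn0.
Qed.

Lemma iidx_mk a q (i : 'I_a) (j : 'I_q) : iidx (mkidx i j) = j.
Proof. by apply/val_inj => /=; rewrite modnMDl modn_small. Qed.

Lemma mk_idx a q (k : 'I_(a * q)) : mkidx (bidx k) (iidx k) = k.
Proof. by apply/val_inj => /=; rewrite -divn_eq. Qed.

Lemma sum_blk (V : nmodType) a q (F : 'I_(a * q) -> V) :
  \sum_k F k = \sum_(i < a) \sum_(j < q) F (mkidx i j).
Proof.
rewrite pair_big /= (reindex (fun p : 'I_a * 'I_q => mkidx p.1 p.2)) //=.
apply: onW_bij; exists (fun k => (bidx k, iidx k)).
  by case=> i j /=; rewrite bidx_mk iidx_mk.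
by move=> k; rewrite mk_idx.
Qed.

Section B.
Variable R : pzRingType.

Lemma blockcol_mul a p q r (f : 'I_a -> 'M[R]_(p, q)) (M : 'M[R]_(q, r)) :
  blockcol f *m M = blockcol (fun i => f i *m M).
Proof.
apply/matrixP => i j; rewrite !mxE; apply: eq_bigr => k _; by rewrite !mxE.
Qed.

Lemma blockrow_mul_col a p q r (f : 'I_a -> 'M[R]_(p, q)) (g : 'I_a -> 'M[R]_(q, r)) :
  blockrow f *m blockcol g = \sum_i f i *m g i.
Proof.
apply/matrixP => i j; rewrite mxE summxE sum_blk; apply: eq_bigr => k _.
rewrite mxE; apply: eq_bigr => l _; by rewrite !mxE bidx_mk iidx_mk.
Qed.

Lemma blockmx_mul_col a b p q r (f : 'I_a -> 'I_b -> 'M[R]_(p, q))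
  (g : 'I_b -> 'M[R]_(q, r)) :
  blockmx f *m blockcol g = blockcol (fun i => \sum_j f i j *m g j).
Proof.
apply/matrixP => i j; rewrite !mxE summxE sum_blk; apply: eq_bigr => k _.
rewrite mxE; apply: eq_bigr => l _; by rewrite !mxE bidx_mk iidx_mk.
Qed.

Lemma blockcolD a p q (f g : 'I_a -> 'M[R]_(p, q)) :
  blockcol f + blockcol g = blockcol (fun i => f i + g i).
Proof. by apply/matrixP => i j; rewrite !mxE. Qed.

Lemma blockcolN a p q (f : 'I_a -> 'M[R]_(p, q)) :
  - blockcol f = blockcol (fun i => - f i).
Proof. by apply/matrixP => i j; rewrite !mxE. Qed.

Lemma blockcol_eq a p q (f g : 'I_a -> 'M[R]_(p, q)) :
  (forall i, f i = g i) -> blockcol f = blockcol g.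
Proof. by move=> H; apply/matrixP => i j; rewrite !mxE H. Qed.

End B.

Lemma traj (R : pzRingType) n m T (A : 'M[R]_n) (B : 'M[R]_(n, m))
  (x : nat -> 'cV[R]_n) (u : nat -> 'cV[R]_m) :
  (forall k, (k < T)%N -> x k.+1 = A *m x k + B *m u k) ->
  forall t i, (t + i <= T)%N ->
  x (t + i)%N = A ^+ i *m x t + \sum_(j < i) A ^+ (i - 1 - j) *m B *m u (t + j)%N.
Proof.
move=> Hx t; elim=> [|i IH] Hti.
  by rewrite addn0 big_ord0 expr0 mul1mx addr0.
have eA : forall k, A *m A ^+ k = A ^+ k.+1 by move=> k; rewrite exprS.
rewrite addnS Hx; last lia.
rewrite IH; last lia.
rewrite big_ord_recr /= mulmxDr mulmxA eA mulmx_sumr -addrA; congr (_ + _).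
have -> : (i.+1 - 1 - i)%N = 0%N by lia.
rewrite expr0 mul1mx; congr (_ + _).
apply: eq_bigr => j _; rewrite !mulmxA eA.
have -> : (i.+1 - 1 - j)%N = (i - 1 - j).+1 by have := ltn_ord j; lia.
by [].
Qed.

Lemma stack_y (R : realFieldType) n m p l T (A : 'M[R]_n) (B : 'M[R]_(n, m))
  (C : 'M[R]_(p, n))
  (x : nat -> 'cV[R]_n) (u : nat -> 'cV[R]_m)
  (du : nat -> 'cV[R]_m) (dy : nat -> 'cV[R]_p)
  (um : nat -> 'cV[R]_m) (ym : nat -> 'cV[R]_p) :
  (forall k, (k < T)%N -> x k.+1 = A *m x k + B *m u k) ->
  (forall k, (k <= T)%N -> um k = u k + du k) ->
  (forall k, (k <= T)%N -> ym k = C *m x k + dy k) ->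
  forall t, (t + l <= T)%N ->
  stack l ym t - stack l dy t =
    obsmx A C l *m x t + toepmx A B C l *m (stack l um t - stack l du t).
Proof.
move=> Hx Hu Hy t Htl.
rewrite /stack /obsmx /toepmx !blockcolN !blockcolD blockcol_mul blockmx_mul_col.
rewrite blockcolD; apply: blockcol_eq => i.
have il := ltn_ord i.
rewrite Hy; last lia.
rewrite addrK (traj Hx); last lia.
rewrite mulmxDr !mulmxA; congr (_ + _).
rewrite mulmx_sumr (big_ord_widen l (fun j => C *m (A ^+ (i - 1 - j) *m B *m u (t + j)%N)) (ltnW il)) big_mkcond /=.
apply: eq_bigr => j _.
have jl := ltn_ord j.
rewrite Hu; last lia.
rewrite addrK; case: ifP => // ji; last by rewrite mul0mx.
rewrite !mulmxA.
have -> : (i - j - 1)%N = (i - 1 - j)%N by lia.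
by [].
Qed.

Lemma part1 (R : realFieldType) n m p l T (A : 'M[R]_n) (B : 'M[R]_(n, m))
  (C : 'M[R]_(p, n)) (OL : 'M[R]_(n, l * p))
  (x : nat -> 'cV[R]_n) (u : nat -> 'cV[R]_m)
  (du : nat -> 'cV[R]_m) (dy : nat -> 'cV[R]_p)
  (um : nat -> 'cV[R]_m) (ym : nat -> 'cV[R]_p) :
  OL *m obsmx A C l = 1%:M ->
  (forall k, (k < T)%N -> x k.+1 = A *m x k + B *m u k) ->
  (forall k, (k <= T)%N -> um k = u k + du k) ->
  (forall k, (k <= T)%N -> ym k = C *m x k + dy k) ->
  forall k, (l <= k)%N -> (k <= T)%N ->
     ym k = Z1 A C OL *m stack l ym (k - l) + Z2 A B C OL *m stack l um (k - l)
            - Z1 A C OL *m stack l dy (k - l) - Z2 A B C OL *m stack l du (k - l) + dy k.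
Proof.
move=> HO Hx Hu Hy k lk kT.
have [t kE] : exists t, k = (t + l)%N by exists (k - l)%N; rewrite subnK.
subst k; rewrite addnK.
have HY := stack_y Hx Hu Hy kT.
have xt : x t = OL *m (stack l ym t - stack l dy t)
               - OL *m toepmx A B C l *m (stack l um t - stack l du t).
  by rewrite HY mulmxDr mulmxA HO mul1mx mulmxA addrK.
have Hxk : x (t + l)%N = A ^+ l *m x t + ctrbmx A B l *m (stack l um t - stack l du t).
  rewrite (traj Hx) // /ctrbmx /stack blockcolN blockcolD blockrow_mul_col.
  congr (_ + _); apply: eq_bigr => j _.
  rewrite Hu; last by have := ltn_ord j; lia.
  by rewrite addrK subnAC.
rewrite Hy // Hxk xt /Z1 /Z2.
have -> : C *m A ^+ l *m OL *m stack l ym t + (C *m ctrbmx A B l - C *m A ^+ l *m OL *m toepmx A B C l) *m stack l um t -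
  C *m A ^+ l *m OL *m stack l dy t -
  (C *m ctrbmx A B l - C *m A ^+ l *m OL *m toepmx A B C l) *m stack l du t
  = C *m A ^+ l *m OL *m (stack l ym t - stack l dy t) + (C *m ctrbmx A B l - C *m A ^+ l *m OL *m toepmx A B C l) *m (stack l um t - stack l du t).
  by rewrite !mulmxBr addrACA addrA.
move: (stack l ym t - stack l dy t) (stack l um t - stack l du t) => Yd Ud.
congr (_ + _).
rewrite !mulmxDr !mulmxN mulmxBl !mulmxA.
by rewrite [RHS]addrA addrAC.
Qed.

Lemma shift_stack (R : realFieldType) l q (s : nat -> 'cV[R]_q) t v :
  (0 < l)%N -> v = s (t + l)%N ->
  stack l s t.+1 = shiftmx R l q *m stack l s t + lastblk R l q *m v.
Proof.
move=> l0 ->.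
rewrite /shiftmx /lastblk /stack blockmx_mul_col blockcol_mul blockcolD.
apply: blockcol_eq => i.
have il := ltn_ord i.
case: (ltnP i.+1 l) => h.
  rewrite (bigD1 (Ordinal h)) //= eqxx mul1mx big1 ?add0r ?addr0.
    have -> : (i == l.-1 :> nat) = false by apply/eqP; lia.
    by rewrite mul0mx addr0 addSnnS.
  move=> j hj; case: eqP => e; last by rewrite mul0mx.
  by case/eqP: hj; apply/val_inj.
rewrite big1 ?add0r.
  have -> : (i == l.-1 :> nat) = true by apply/eqP; lia.
  rewrite mul1mx; congr s; lia.
move=> j _; case: eqP => e; last by rewrite mul0mx.
by have := ltn_ord j; lia.
Qed.

Lemma part2 (R : realFieldType) n m p l T (A : 'M[R]_n) (B : 'M[R]_(n, m))
  (C : 'M[R]_(p, n)) (OL : 'M[R]_(n, l * p))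
  (x : nat -> 'cV[R]_n) (u : nat -> 'cV[R]_m)
  (du : nat -> 'cV[R]_m) (dy : nat -> 'cV[R]_p)
  (um : nat -> 'cV[R]_m) (ym : nat -> 'cV[R]_p) :
  (0 < l)%N ->
  OL *m obsmx A C l = 1%:M ->
  (forall k, (k < T)%N -> x k.+1 = A *m x k + B *m u k) ->
  (forall k, (k <= T)%N -> um k = u k + du k) ->
  (forall k, (k <= T)%N -> ym k = C *m x k + dy k) ->
  forall k, (l <= k)%N -> (k <= T)%N ->
     col_mx (stack l ym (k - l).+1) (stack l um (k - l).+1) =
       (Fmx R l p m + Lmx R l p m *m row_mx (Z1 A C OL) (Z2 A B C OL))
         *m col_mx (stack l ym (k - l)) (stack l um (k - l))
       + Bmx R l p m *m um k
       + Lmx R l p m *m row_mx 1%:M (row_mx (- Z1 A C OL) (- Z2 A B C OL))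
           *m col_mx (dy k) (col_mx (stack l dy (k - l)) (stack l du (k - l))).
Proof.
move=> l0 HO Hx Hu Hy k lk kT.
have P1 := part1 HO Hx Hu Hy lk kT.
move: (Z1 A C OL) (Z2 A B C OL) P1 => Z1l Z2l P1.
have tk : (k - l + l)%N = k by rewrite subnK.
rewrite (@shift_stack _ _ _ ym (k - l) (ym k)) ?tk //.
rewrite (@shift_stack _ _ _ um (k - l) (um k)) ?tk //.
rewrite P1.
rewrite /Fmx /Lmx /Bmx mulmxDl mul_block_col !mul0mx addr0 add0r.
rewrite -!mulmxA !mul_row_col !mul_col_mx !mul0mx !add_col_mx ?addr0 ?add0r.
congr col_mx.
rewrite -[RHS]addrA -(mulmxDr (lastblk R l p)) mul1mx !mulNmx; congr (_ + _ *m _).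
by rewrite -!addrA; congr (_ + (_ + _)); rewrite [RHS]addrC -addrA.
Qed.

Lemma addmx_ij (R : pzRingType) a b (M N : 'M[R]_(a, b)) i j : (M + N) i j = M i j + N i j.
Proof. by rewrite mxE. Qed.

Lemma mulfun_ij (R : pzRingType) a q N (M : 'M[R]_(a, q)) (v : 'I_N -> 'cV[R]_q) r c :
  (M *m \matrix_(i, j) (v j) i 0) r c = (M *m v c) r 0.
Proof. rewrite !mxE; apply: eq_bigr => k _; by rewrite mxE. Qed.

Unset Implicit Arguments.

Theorem lemma4 (R : realFieldType) (n m p l T : nat)
  (A : 'M[R]_n) (B : 'M[R]_(n, m)) (C : 'M[R]_(p, n))
  (OL : 'M[R]_(n, l * p))
  (x : nat -> 'cV[R]_n) (u : nat -> 'cV[R]_m)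
  (du : nat -> 'cV[R]_m) (dy : nat -> 'cV[R]_p)
  (um : nat -> 'cV[R]_m) (ym : nat -> 'cV[R]_p) :
  (0 < l)%N ->
  obs_index A C l ->
  OL *m obsmx A C l = 1%:M ->
  (forall k, (k < T)%N -> x k.+1 = A *m x k + B *m u k) ->
  (forall k, (k <= T)%N -> um k = u k + du k) ->
  (forall k, (k <= T)%N -> ym k = C *m x k + dy k) ->
  let Z1l := Z1 A C OL in
  let Z2l := Z2 A B C OL in
  let Zl := Zmx A B C OL in
  let Fl := Fmx R l p m in
  let Ll := Lmx R l p m in
  let Bl := Bmx R l p m in
  let Al := Fl + Ll *m Zl in
  let Bdl := Ll *m row_mx 1%:M (- Zl) in
  let N := (T.+1 - l)%N in
  (forall k, (l <= k)%N -> (k <= T)%N ->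
     ym k = Z1l *m stack l ym (k - l) + Z2l *m stack l um (k - l)
            - Z1l *m stack l dy (k - l) - Z2l *m stack l du (k - l) + dy k) /\
  (forall k, (l <= k)%N -> (k <= T)%N ->
     col_mx (stack l ym (k - l).+1) (stack l um (k - l).+1) =
       (Fl + Ll *m row_mx Z1l Z2l) *m col_mx (stack l ym (k - l)) (stack l um (k - l))
       + Bl *m um k
       + Ll *m row_mx 1%:M (row_mx (- Z1l) (- Z2l))
           *m col_mx (dy k) (col_mx (stack l dy (k - l)) (stack l du (k - l)))) /\
  (Psimx l N ym um 1 = (Fl + Ll *m Zl) *m Psimx l N ym um 0
                        + Bl *m U1mx l N um
                        + Ll *m row_mx 1%:M (- Zl) *m Delta10 l N dy du /\
   Psimx l N ym um 1 = Al *m Psimx l N ym um 0 + Bl *m U1mx l N um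
                        + Bdl *m Delta10 l N dy du).
Proof.
move=> l0 Hobs HO Hx Hu Hy Z1l Z2l Zl Fl Ll Bl Al Bdl N.
have P1 := part1 HO Hx Hu Hy.
have P2 := part2 l0 HO Hx Hu Hy.
have H3 : Psimx l N ym um 1 = (Fl + Ll *m Zl) *m Psimx l N ym um 0
                        + Bl *m U1mx l N um
                        + Ll *m row_mx 1%:M (- Zl) *m Delta10 l N dy du.
  apply/matrixP => r c.
  rewrite [LHS]mxE !addmx_ij /Psimx /U1mx /Delta10 !mulfun_ij.
  have cN := ltn_ord c.
  have cT : (l + c <= T)%N by move: cN; rewrite /N; lia.
  have := P2 (l + c)%N (leq_addr _ _) cT.
  rewrite addKn => E.
  rewrite add0n add1n E !addmx_ij /Zl /Zmx opp_row_mx.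
  by [].
split; first exact: P1.
split; first exact: P2.
by split.
Qed.
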